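(* There exists a natural number $n_0$ such that for every natural number $n\ge n_0$ there exists a real symmetric $n\times n$ matrix $T$ with $\|T\|_1=1$ and $$\forall R,C\in M_n(\mathbb{C}):\quad|\mathrm{tr}((R\circ C)T)|\le3\|R\|_r\|C\|_c\,n^{-1/2}.$$
   Context: $\|T\|_1$ is the trace norm (first Schatten norm, the sum of the singular values). $R\circ C$ is the entrywise Schur product $(r_{ij}c_{ij})$. $\|R\|_r:=\max_i(\sum_j|r_{ij}|^2)^{1/2}$ and $\|C\|_c:=\max_j(\sum_i|c_{ij}|^2)^{1/2}$. *)

(* Defs.v *)
From HB Require Import structures.
From mathcomp Require Import all_boot all_order all_algebra.
From mathcomp Require Import reals.
From mathcomp Require Export complex.
Set Implicit Arguments. Unset Strict Implicit. Unset Printing Implicit Defensive.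
Import Order.TTheory GRing.Theory Num.Theory.
Local Open Scope ring_scope.

Section Defs.
Variable R : realType.
Local Notation C := (R[i]).

Definition adjmx n (A : 'M[C]_n) : 'M[C]_n := (map_mx Num.conj A)^T.

(* t is the trace norm (sum of singular values) of A: the singular values are
   the nonnegative square roots of the eigenvalues (with multiplicity) of A^* A,
   i.e. of the roots of its characteristic polynomial.  The multiset s of roots
   is uniquely determined, so this relation is functional. *)
Definition is_trace_norm n (A : 'M[C]_n) (t : C) : Prop :=
  exists s : seq C,
    char_poly (adjmx A *m A) = \prod_(x <- s) ('X - x%:P) /\
    t = \sum_(x <- s) sqrtC x.

Definition schur n (A B : 'M[C]_n) : 'M[C]_n := \matrix_(i, j) (A i j * B i j).

Definition rownorm n (A : 'M[C]_n) : C :=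
  \big[Num.max/0]_(i < n) sqrtC (\sum_(j < n) `|A i j| ^+ 2).

Definition colnorm n (A : 'M[C]_n) : C :=
  \big[Num.max/0]_(j < n) sqrtC (\sum_(i < n) `|A i j| ^+ 2).

Definition cplxmx n (T : 'M[R]_n) : 'M[C]_n := map_mx (fun x => (x%:C)%C) T.

End Defs.

(* Main.v *)
Require Import Defs.
From HB Require Import structures.
From mathcomp Require Import all_boot all_order all_algebra.
From mathcomp Require Import reals complex ring zify.
Import Order.TTheory GRing.Theory Num.Theory.
Local Open Scope ring_scope.
Lemma bigmax_ge (F : numDomainType) n (f : 'I_n -> F) i0 :
  (forall i, 0 <= f i) -> f i0 <= \big[Num.max/0]_(i < n) f i.
Proof.
move=> f0.
have h : forall s, 0 <= \big[Num.max/0]_(i <- s) f i.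
  move=> s; apply: (big_ind (fun x => 0 <= x)) => //= x y x0 y0.
  by rewrite comparable_le_max ?x0 // real_comparable ?ger0_real.
have : i0 \in index_enum 'I_n by rewrite mem_index_enum.
elim: (index_enum 'I_n) => // a s IH; rewrite inE big_cons => /orP [/eqP <-|/IH hs].
  by rewrite comparable_le_max ?lexx // real_comparable ?ger0_real.
by rewrite comparable_le_max ?hs ?orbT // real_comparable ?ger0_real.
Qed.

Lemma bigmax_ge0 (F : numDomainType) n (f : 'I_n -> F) :
  (forall i, 0 <= f i) -> 0 <= \big[Num.max/0]_(i < n) f i.
Proof.
move=> f0; apply: (big_ind (fun x => 0 <= x)) => //= x y x0 y0.
by rewrite comparable_le_max ?x0 // real_comparable ?ger0_real.
Qed.

Lemma amgm (F : numDomainType) (a b : F) : 0 <= a -> 0 <= b ->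
  2%:R * (a * b) <= a ^+ 2 + b ^+ 2.
Proof.
move=> a0 b0; rewrite -subr_ge0.
have -> : a ^+ 2 + b ^+ 2 - 2%:R * (a * b) = (a - b) ^+ 2.
  by rewrite sqrrB; rewrite mulr_natl mulr2n; rewrite addrAC.
by apply: real_exprn_even_ge0 => //; apply: realB; apply: ger0_real.
Qed.

Lemma cs_core (F : numFieldType) N (x y : 'I_N -> 'I_N -> F) r c :
  (forall i j, 0 <= x i j) -> (forall i j, 0 <= y i j) -> 0 <= r -> 0 <= c ->
  (forall i, \sum_j x i j ^+ 2 <= r ^+ 2) -> (forall j, \sum_i y i j ^+ 2 <= c ^+ 2) ->
  \sum_i \sum_j x i j * y i j <= N%:R * r * c.
Proof.
move=> x0 y0 r0 c0 hx hy.
have rhs0 : 0 <= N%:R * r * c by rewrite !mulr_ge0.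
have [r00|rn0] := eqVneq r 0.
  rewrite big1 // => i _; rewrite big1 // => j _.
  have := hx i; rewrite r00 expr0n /= => h.
  have : \sum_j x i j ^+ 2 == 0 by rewrite eq_le h sumr_ge0 // => k _; rewrite exprn_ge0.
  move/eqP/psumr_eq0P => /(_ (fun k _ => exprn_ge0 _ (x0 i k)) j isT)/eqP.
  by rewrite expf_eq0 /= => /eqP ->; rewrite mul0r.
have [c00|cn0] := eqVneq c 0.
  rewrite big1 // => i _; rewrite big1 // => j _.
  have := hy j; rewrite c00 expr0n /= => h.
  have : \sum_i y i j ^+ 2 == 0 by rewrite eq_le h sumr_ge0 // => k _; rewrite exprn_ge0.
  move/eqP/psumr_eq0P => /(_ (fun k _ => exprn_ge0 _ (y0 k j)) i isT)/eqP.
  by rewrite expf_eq0 /= => /eqP ->; rewrite mulr0.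
have rp : 0 < r by rewrite lt_def rn0 r0.
have cp : 0 < c by rewrite lt_def cn0 c0.
have rcp : 0 < 2%:R * (r * c) by rewrite !mulr_gt0.
rewrite -(ler_pM2l rcp).
have step : forall i j, 2%:R * (r * c) * (x i j * y i j) <=
   c ^+ 2 * x i j ^+ 2 + r ^+ 2 * y i j ^+ 2.
  move=> i j.
  have h := @amgm _ _ _ (mulr_ge0 c0 (x0 i j)) (mulr_ge0 r0 (y0 i j)).
  have e1 : 2%:R * (r * c) * (x i j * y i j) = 2%:R * (c * x i j * (r * y i j)) by ring.
  have e2 : c ^+ 2 * x i j ^+ 2 + r ^+ 2 * y i j ^+ 2 = (c * x i j) ^+ 2 + (r * y i j) ^+ 2 by ring.
  by rewrite e1 e2.
apply: (@le_trans _ _ (\sum_i (c ^+ 2 * \sum_j x i j ^+ 2 + r ^+ 2 * \sum_j y i j ^+ 2))).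
  rewrite mulr_sumr; apply: ler_sum => i _.
  rewrite !mulr_sumr -big_split /=; apply: ler_sum => j _; exact: step.
have ex : \sum_i \sum_j y i j ^+ 2 = \sum_j \sum_i y i j ^+ 2 by exact: exchange_big.
rewrite big_split /= -!mulr_sumr ex.
have h1 : \sum_i \sum_j x i j ^+ 2 <= \sum_(i < N) r ^+ 2 by apply: ler_sum => i _; exact: hx.
have h2 : \sum_j \sum_i y i j ^+ 2 <= \sum_(j < N) c ^+ 2 by apply: ler_sum => j _; exact: hy.
apply: le_trans (lerD (ler_wpM2l (exprn_ge0 _ c0) h1) (ler_wpM2l (exprn_ge0 _ r0) h2)) _.
rewrite !sumr_const !card_ord -[r ^+ 2 *+ N]mulr_natl -[c ^+ 2 *+ N]mulr_natl.
have -> : c ^+ 2 * (N%:R * r ^+ 2) + r ^+ 2 * (N%:R * c ^+ 2) = 2%:R * (r * c) * (N%:R * r * c) by ring.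
exact: lexx.
Qed.
Lemma arith (R : realType) (m N : nat) : (0 < m)%N -> (N < 2 * m)%N -> (0 < N)%N ->
  (m%:R * Num.sqrt (m%:R : R))^-1 * N%:R <= 3%:R / Num.sqrt (N%:R : R).
Proof.
move=> m0 Nm N0.
have mR0 : (0 : R) < m%:R by rewrite ltr0n.
have NR0 : (0 : R) < N%:R by rewrite ltr0n.
have sm0 : (0 : R) < Num.sqrt m%:R by rewrite sqrtr_gt0.
have sN0 : (0 : R) < Num.sqrt N%:R by rewrite sqrtr_gt0.
rewrite ler_pdivlMr // -mulrA mulrC ler_pdivrMr ?mulr_gt0 //.
rewrite -ler_sqr ?nnegrE ?mulr_ge0 ?ltW //.
rewrite !exprMn !sqr_sqrtr ?ler0n // -!natrX -!natrM ltr_nat.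
have h : (N * N * N <= (2 * m) * (2 * m) * (2 * m))%N.
  by apply: leq_mul; [apply: leq_mul|]; apply: ltnW.
rewrite !expnS !expn0. lia.
Qed.

Section S.
Variable R : realType.
Fixpoint d k := if k is k'.+1 then (d k' + d k')%N else 1%N.
Fixpoint had k : 'M[R]_(d k) :=
  if k is k'.+1 return 'M[R]_(d k) then block_mx (had k') (had k') (had k') (- had k') else 1%:M.
Lemma had_tr k : (had k)^T = had k.
Proof. elim: k => [|k IH] /=; first by rewrite tr_scalar_mx.
by rewrite tr_block_mx linearN /= IH. Qed.
Lemma had_sq k : had k *m had k = (d k)%:R%:M.
Proof. elim: k => [|k IH] /=; first by rewrite mul1mx.
rewrite mulmx_block IH mulmxN mulNmx IH mulmxN mulNmx opprK IH subrr scalar_mx_block natrD raddfD.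
by []. Qed.
Lemma had_le1 k i j : `|had k i j| <= 1.
Proof. elim: k i j => [|k IH] /= i j; first by rewrite !mxE; case: (i == j); rewrite ?normr1 ?normr0.
rewrite -(splitK i) -(splitK j); case: (split i) => a; case: (split j) => b /=;
by rewrite ?block_mxEul ?block_mxEur ?block_mxEdl ?block_mxEdr ?mxE ?normrN IH. Qed.
Local Open Scope complex_scope.
Lemma normC_real (x : R) : `|x%:C| = `|x|%:C :> R[i].
Proof. by rewrite normc_def /= expr0n /= addr0 sqrtr_sqr. Qed.

Lemma sqrtC_realC (x : R) : 0 <= x -> sqrtC (x%:C : R[i]) = (Num.sqrt x)%:C.
Proof.
move=> x0; rewrite -{1}(sqr_sqrtr x0) rmorphXn /= sqrCK //.
by rewrite ler0c sqrtr_ge0.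
Qed.

Lemma conj_real (x : R) : Num.conj (x%:C : R[i]) = x%:C.
Proof. by apply: conj_Creal; rewrite complex_real. Qed.

Lemma blk_entry m p (a : R) (i j : 'I_(m + p)) :
  (block_mx a%:M 0 0 0 : 'M_(m + p)) i j =
  if (val i < m)%N && (val i == val j) then a else 0.
Proof.
rewrite -(splitK i) -(splitK j); case: (split i) => a'; case: (split j) => b' /=;
rewrite ?block_mxEul ?block_mxEur ?block_mxEdl ?block_mxEdr ?mxE //=.
- rewrite ltn_ord /=; have -> : (nat_of_ord a' == nat_of_ord b') = (a' == b') by []; by case: (a' == b').
- by rewrite ltn_ord /=; rewrite ltn_eqF // (leq_trans (ltn_ord a')) // leq_addr.
- by rewrite ltnNge leq_addr.
- by rewrite ltnNge leq_addr.
Qed.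
End S.

Local Open Scope complex_scope.
Section S2.
Variable R : realType.
Lemma adj_sym n (S : 'M[R]_n) : S^T = S -> adjmx (cplxmx S) = cplxmx S.
Proof.
move=> hS; apply/matrixP => i j; rewrite !mxE conj_real.
by have := congr1 (fun M : 'M[R]_n => M i j) hS; rewrite mxE => ->.
Qed.

Lemma gen_thm m p (H : 'M[R]_m) : (0 < m)%N -> (p < m)%N -> H^T = H ->
  H *m H = (m%:R)%:M -> (forall i j, `|H i j| <= 1) ->
  exists T : 'M[R]_(m + p),
      T^T = T /\
      is_trace_norm (cplxmx T) 1 /\
      (forall A B : 'M[R[i]]_(m + p),
         `|\tr (schur A B *m cplxmx T)|
           <= 3%:R * rownorm A * colnorm B / sqrtC ((m + p)%:R : R[i])).
Proof.
move=> m0 pm Hs Hsq Hb.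
pose c : R := (m%:R * Num.sqrt m%:R)^-1.
have mR0 : (0 : R) < m%:R by rewrite ltr0n.
have sm0 : (0 : R) < Num.sqrt m%:R by rewrite sqrtr_gt0.
have c0 : 0 < c by rewrite invr_gt0 mulr_gt0.
pose T : 'M[R]_(m + p) := block_mx (c *: H) 0 0 0.
have Ts : T^T = T by rewrite /T tr_block_mx !trmx0 linearZ /= Hs.
exists T; split => //; split.
  have adjT : adjmx (cplxmx T) = cplxmx T.
    exact: adj_sym.
  have TT : T *m T = block_mx ((c ^+ 2 * m%:R)%:M) 0 0 0.
    rewrite /T mulmx_block !mulmx0 !mul0mx !addr0 -scalemxAl -scalemxAr Hsq.
    by rewrite scalerA scale_scalar_mx expr2.
  pose a : R := c ^+ 2 * m%:R.
  have ae : a = (m%:R^-1) ^+ 2.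
    rewrite /a /c invfM exprMn !exprVn sqr_sqrtr ?ler0n //.
    by field; rewrite pnatr_eq0 -lt0n.
  have DE : adjmx (cplxmx T) *m cplxmx T = cplxmx (T *m T).
    rewrite adjT; apply/matrixP => i j; rewrite !mxE rmorph_sum /=.
    by apply: eq_bigr => k _; rewrite !mxE rmorphM.
  pose D := cplxmx (T *m T).
  have Dii : forall i j, D i j = (if (val i < m)%N && (val i == val j) then a else 0)%:C.
    by move=> i j; rewrite /D mxE TT blk_entry.
  exists (map (fun i => D i i) (index_enum 'I_(m + p))).
  rewrite DE char_poly_trig; last first.
    apply/is_trig_mxP => i j lt_ij; rewrite Dii.
    by rewrite (ltn_eqF lt_ij) andbF.
  rewrite big_map big_map; split; first by [].
  rewrite big_split_ord /= [X in _ + X]big1; last first.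
    by move=> i _; rewrite Dii /= ltnNge leq_addr /= sqrtC0.
  rewrite addr0 (eq_bigr (fun _ => ((m%:R)^-1)%:C)); last first.
    move=> i _; rewrite Dii /= ltn_ord eqxx /= ae rmorphXn /= sqrCK //.
    by rewrite ler0c invr_ge0 ler0n.
  rewrite sumr_const card_ord -rmorphMn /= -mulr_natr mulVf ?pnatr_eq0 -?lt0n //.
move=> A B.
have Tb : forall i j, `|T i j| <= c.
  move=> i j; rewrite /T -(splitK i) -(splitK j); case: (split i) => a'; case: (split j) => b' /=;
  rewrite ?block_mxEul ?block_mxEur ?block_mxEdl ?block_mxEdr ?mxE ?normr0; try exact: (ltW c0).
  by rewrite normrM gtr0_norm //; apply: ler_piMr; [exact: ltW | exact: Hb].
clearbody T.
have rA0 : 0 <= rownorm A.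
  by apply: bigmax_ge0 => k; rewrite sqrtC_ge0 sumr_ge0 // => l _; rewrite exprn_ge0.
have cB0 : 0 <= colnorm B.
  by apply: bigmax_ge0 => k; rewrite sqrtC_ge0 sumr_ge0 // => l _; rewrite exprn_ge0.
have hA : forall i, \sum_j `|A i j| ^+ 2 <= rownorm A ^+ 2.
  move=> i; have h0 : 0 <= \sum_j `|A i j| ^+ 2 by rewrite sumr_ge0 // => l _; rewrite exprn_ge0.
  have h1 : sqrtC (\sum_j `|A i j| ^+ 2) <= rownorm A.
    apply: (@bigmax_ge _ _ (fun i => sqrtC (\sum_j `|A i j| ^+ 2)) i) => k.
    by rewrite sqrtC_ge0 sumr_ge0 // => l _; rewrite exprn_ge0.
  by move: h1; rewrite -ler_sqr ?nnegrE ?sqrtC_ge0 // sqrtCK.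
have hB : forall j, \sum_i `|B i j| ^+ 2 <= colnorm B ^+ 2.
  move=> j; have h0 : 0 <= \sum_i `|B i j| ^+ 2 by rewrite sumr_ge0 // => l _; rewrite exprn_ge0.
  have h1 : sqrtC (\sum_i `|B i j| ^+ 2) <= colnorm B.
    apply: (@bigmax_ge _ _ (fun j => sqrtC (\sum_i `|B i j| ^+ 2)) j) => k.
    by rewrite sqrtC_ge0 sumr_ge0 // => l _; rewrite exprn_ge0.
  by move: h1; rewrite -ler_sqr ?nnegrE ?sqrtC_ge0 // sqrtCK.
have cs := @cs_core _ _ (fun i j => `|A i j|) (fun i j => `|B i j|) _ _
  (fun i j => normr_ge0 _) (fun i j => normr_ge0 _) rA0 cB0 hA hB.
rewrite /mxtrace; apply: le_trans (ler_norm_sum _ _ _) _.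
apply: (@le_trans _ _ (\sum_i c%:C * \sum_j `|A i j| * `|B i j|)).
  apply: ler_sum => i _; rewrite !mxE; apply: le_trans (ler_norm_sum _ _ _) _.
  rewrite mulr_sumr; apply: ler_sum => j _; rewrite !mxE !normrM mulrC.
  apply: ler_wpM2r; first by rewrite mulr_ge0.
  by rewrite normC_real lecR.
rewrite -mulr_sumr.
apply: le_trans (ler_wpM2l _ cs) _; first by rewrite ler0c ltW.
have key := @arith R m (m + p) m0.
have Nm : (m + p < 2 * m)%N by lia.
have N0 : (0 < m + p)%N by lia.
have {}key := key Nm N0.
have eN : ((m + p)%:R : R[i]) = ((m + p)%:R : R)%:C by rewrite rmorph_nat.
rewrite eN sqrtC_realC ?ler0n //.
have e1 : c%:C * (((m + p)%:R : R)%:C * rownorm A * colnorm B) =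
   (c * (m + p)%:R)%:C * (rownorm A * colnorm B) by rewrite rmorphM; ring.
have e2 : 3%:R * rownorm A * colnorm B / (Num.sqrt ((m + p)%:R : R))%:C =
   (3%:R / Num.sqrt ((m + p)%:R : R))%:C * (rownorm A * colnorm B).
  by rewrite rmorphM fmorphV /= rmorph_nat; ring.
by rewrite e1 e2 ler_wpM2r ?mulr_ge0 // lecR.
Qed.
End S2.

Section S3.
Lemma d_pos k : (0 < d k)%N.
Proof. by elim: k => //= k IH; rewrite addn_gt0 IH. Qed.

Lemma d_exists n : (0 < n)%N -> exists k, (d k <= n < d k + d k)%N.
Proof.
elim: n => // n IH _.
have [->|n0] := eqVneq n 0%N; first by exists 0%N.
have [k /andP [h1 h2]] := IH (neq0_lt0n (negbTE n0)).
have [e|ne] := eqVneq n.+1 (d k + d k).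
  exists k.+1; rewrite /= e leqnn /=.
  by have := d_pos k; lia.
by exists k; apply/andP; split; lia.
Qed.
End S3.

Theorem mainTheorem5 (R : realType) :
  exists n0 : nat, forall n : nat, (n0 <= n)%N ->
    exists T : 'M[R]_n,
      T^T = T /\
      is_trace_norm (cplxmx T) 1 /\
      (forall A B : 'M[R[i]]_n,
         `|\tr (schur A B *m cplxmx T)|
           <= 3%:R * rownorm A * colnorm B / sqrtC (n%:R : R[i])).
Proof.
exists 1%N => n n1.
have [k /andP [h1 h2]] := @d_exists n n1.
have [p ep] : exists p, n = (d k + p)%N by exists (n - d k)%N; lia.
subst n.
apply: gen_thm; first exact: d_pos.
- lia.
- exact: had_tr.
- exact: had_sq.
- exact: had_le1.
Qed.
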